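(* Let $n\ge3$, $\varepsilon\ge0$, let $\mathcal{M}\subseteq\{1,\dots,n\}$ be a sample set that is a union of twin samples (pairs $\{i,i+1\}$) and contains $1$ and $n$, let $A=\mathbf{I}_{\mathcal{M}}$ and $y\in\mathbb{R}^{|\mathcal{M}|}$. If $z^\star\in\mathbb{R}^n$ is an optimal solution of $\min_{z}\|Dz\|_1$ subject to $\|Az-y\|_\infty\le\varepsilon$, then $z^\star$ is sign consistent with respect to $\mathcal{M}$.
   Context: $D\in\mathbb{R}^{(n-2)\times n}$ is the second-order difference operator, $(Dz)_k=z_k-2z_{k+1}+z_{k+2}$; $\mathbf{I}_{\mathcal{M}}$ consists of the rows of the identity indexed by $\mathcal{M}$, so $Az=z_{\mathcal{M}}$. For $k\in\{2,\dots,n-1\}$ let $s_k=\mathrm{sign}(z_{k-1}-2z_k+z_{k+1})$ (with $\mathrm{sign}(0)=0$). A profile $z$ is sign consistent (with respect to $\mathcal{M}$) if for any two consecutive samples $i<j$ in $\mathcal{M}$ (no element of $\mathcal{M}$ strictly between them) one of the following holds: (i) for all $k,h$ with $i\le k,h\le j$ (for which $s_k,s_h$ are defined), $s_k\ne0$ and $s_h\ne0$ imply $s_k=s_h$; (ii) $s_k=0$ for every $k$ with $i<k<j$. *)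

(* Defs.v *)
(* Indices are 1-based natural numbers as in the paper:
   a vector z in R^n is a function z : nat -> R of which only z 1, ..., z n
   are relevant. *)
From mathcomp Require Import all_boot all_order all_algebra.
Set Implicit Arguments. Unset Strict Implicit. Unset Printing Implicit Defensive.
Import Order.TTheory GRing.Theory Num.Theory.
Local Open Scope ring_scope.

Definition D2 {R : numDomainType} (z : nat -> R) (k : nat) : R :=
  z k - 2 * z k.+1 + z k.+2.

Definition tv2 {R : numDomainType} (n : nat) (z : nat -> R) : R :=
  \sum_(1 <= k < n.-1) `|D2 z k|.

(* ||A z - y||_inf <= eps, A = I_M ; y is indexed by the elements of M *)
Definition feasible {R : numDomainType} (M : pred nat) (y : nat -> R) (eps : R)
  (z : nat -> R) : Prop :=
  forall i, M i -> `|z i - y i| <= eps.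

Definition optimal {R : numDomainType} (n : nat) (M : pred nat) (y : nat -> R)
  (eps : R) (zs : nat -> R) : Prop :=
  feasible M y eps zs /\
  forall z, feasible M y eps z -> tv2 n zs <= tv2 n z.

Definition twin_union (n : nat) (M : pred nat) : Prop :=
  (forall i, M i -> (1 <= i <= n)%N) /\
  (forall i, M i -> exists j, [/\ (j = i \/ j.+1 = i), (1 <= j)%N, (j.+1 <= n)%N,
                                 M j & M j.+1]).

Definition sgn2 {R : numDomainType} (z : nat -> R) (k : nat) : R :=
  Num.sg (D2 z k.-1).

Definition sign_consistent {R : numDomainType} (n : nat) (M : pred nat)
  (z : nat -> R) : Prop :=
  forall i j, M i -> M j -> (i < j)%N ->
    (forall m, (i < m < j)%N -> ~~ M m) ->
    (forall k h, (i <= k <= j)%N -> (i <= h <= j)%N ->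
       (2 <= k <= n.-1)%N -> (2 <= h <= n.-1)%N ->
       sgn2 z k != 0 -> sgn2 z h != 0 -> sgn2 z k = sgn2 z h)
    \/ (forall k, (i < k < j)%N -> sgn2 z k = 0).

(* Main.v *)
Require Import Defs.
From mathcomp Require Import all_boot all_order all_algebra.
From mathcomp Require Import ring lra zify.
From Stdlib Require Import Classical.
Import Order.TTheory GRing.Theory Num.Theory.
Local Open Scope ring_scope.
Set Implicit Arguments. Unset Strict Implicit.
Section Arith.
Variable R : realFieldType.
Implicit Types x y w s al ga : R.

Lemma abs_step x s : (x = 0 \/ `|s| <= `|x|) ->
  `|x + s| = `|x| + Num.sg x * s + (if x == 0 then `|s| else 0).
Proof.
case: (ltrgtP x 0) => [x0|x0|->] H.
- have hs := ler_norm s.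
  case: H => [H|H]; first by move: x0; rewrite H ltxx.
  rewrite ltr0_sg // (ltr0_norm x0) in H *; rewrite (ler0_norm (x := x + s)); lra.
- have hs := ler_norm (- s); rewrite normrN in hs.
  case: H => [H|H]; first by move: x0; rewrite H ltxx.
  rewrite gtr0_sg // (gtr0_norm x0) in H *; rewrite (ger0_norm (x := x + s)); lra.
- by rewrite sgr0 add0r mul0r normr0 !add0r.
Qed.

Definition CC x y w al ga := Num.sg x * al - Num.sg y * (al + ga) + Num.sg w * ga.
Definition ZZ x y w al ga := (if x == 0 then al else 0) + (if y == 0 then al + ga else 0)
   + (if w == 0 then ga else 0).

Lemma triple x y w al ga : 0 < al -> 0 < ga ->
  (ZZ x y w al ga < CC x y w al ga \/ ZZ x y w al ga < - CC x y w al ga) ->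
  exists t, `|x + t * al| + `|y - t * (al + ga)| + `|w + t * ga| < `|x| + `|y| + `|w|.
Proof.
move=> al0 ga0 HC.
pose ax := if x == 0 then 1 else `|x|.
pose ay := if y == 0 then 1 else `|y|.
pose aw := if w == 0 then 1 else `|w|.
have pos : forall u : R, 0 < (if u == 0 then 1 else `|u|).
  by move=> u; case: (eqVneq u 0) => [_|nu]; [exact: ltr01 | rewrite normr_gt0].
have cmp : forall u : R, u != 0 -> `|u| = (if u == 0 then 1 else `|u|).
  by move=> u /negbTE ->.
pose m := Order.min ax (Order.min ay aw).
have m0 : 0 < m by rewrite !lt_min pos pos pos.
have mx : m <= ax by rewrite ge_min lexx.
have my : m <= ay by rewrite ge_min ge_min lexx orbT.
have mw : m <= aw by rewrite ge_min ge_min lexx !orbT.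
pose tau := m / (al + ga).
have tau0 : 0 < tau by rewrite divr_gt0 // addr_gt0.
have taum : tau * (al + ga) = m by rewrite /tau divfK // gt_eqF // addr_gt0.
have key (t : R) : `|t| = tau ->
   `|x + t * al| + `|y - t * (al + ga)| + `|w + t * ga| =
   `|x| + `|y| + `|w| + t * CC x y w al ga + tau * ZZ x y w al ga.
  move=> ht.
  rewrite (abs_step (x:=x) (s:=t * al)); last first.
    case: (eqVneq x 0) => [->|nx]; [by left|right].
    rewrite normrM ht (gtr0_norm al0) (cmp _ nx) -/ax; apply: le_trans mx.
    rewrite -taum ler_pM2l //; lra.
  rewrite -mulNr (abs_step (x:=y) (s:=- t * (al + ga))); last first.
    case: (eqVneq y 0) => [->|nx]; [by left|right].
    by rewrite normrM normrN ht (gtr0_norm (addr_gt0 al0 ga0)) (cmp _ nx) -/ay taum.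
  rewrite (abs_step (x:=w) (s:=t * ga)); last first.
    case: (eqVneq w 0) => [->|nx]; [by left|right].
    rewrite normrM ht (gtr0_norm ga0) (cmp _ nx) -/aw; apply: le_trans mw.
    rewrite -taum ler_pM2l //; lra.
  rewrite !normrM normrN ht (gtr0_norm al0) (gtr0_norm ga0) gtr0_norm ?addr_gt0 //.
  rewrite /CC /ZZ.
  case: (x == 0); case: (y == 0); case: (w == 0); ring.
case: HC => HC.
- exists (- tau); rewrite key ?normrN ?(gtr0_norm tau0) //.
  have h : 0 < CC x y w al ga - ZZ x y w al ga by lra.
  have := mulr_gt0 tau0 h; rewrite mulrBr mulNr; lra.
- exists tau; rewrite key ?(gtr0_norm tau0) //.
  have h : 0 < - CC x y w al ga - ZZ x y w al ga by lra.
  have := mulr_gt0 tau0 h; rewrite mulrBr mulrN; lra.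
Qed.

Lemma sg_cases (u : R) : (u < 0 /\ Num.sg u = -1 /\ (u == 0) = false) \/
   (0 < u /\ Num.sg u = 1 /\ (u == 0) = false) \/ (u = 0 /\ Num.sg u = 0 /\ (u == 0) = true).
Proof.
case: (ltrgtP u 0) => H.
- by left; rewrite ltr0_sg // lt_eqF.
- by right; left; rewrite gtr0_sg // gt_eqF.
- by right; right; rewrite H sgr0.
Qed.

Ltac solve_cz x y w :=
  rewrite /CC /ZZ;
  case: (sg_cases x) => [[? [-> ->]]|[[? [-> ->]]|[? [-> ->]]]];
  case: (sg_cases y) => [[? [-> ->]]|[[? [-> ->]]|[? [-> ->]]]];
  case: (sg_cases w) => [[? [-> ->]]|[[? [-> ->]]|[? [-> ->]]]];
  (try subst); (try lra); (try (left; lra)); (try (right; lra)).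

Lemma czA x y w al ga : 0 < al -> 0 < ga -> y != 0 -> Num.sg w = - Num.sg y ->
  (ZZ x y w al ga < CC x y w al ga \/ ZZ x y w al ga < - CC x y w al ga).
Proof. move=> a0 g0 /eqP ny hs; move: hs; solve_cz x y w. Qed.
Lemma czB x y w al ga : 0 < al -> 0 < ga -> x != 0 -> Num.sg y = - Num.sg x ->
  (ZZ x y w al ga < CC x y w al ga \/ ZZ x y w al ga < - CC x y w al ga).
Proof. move=> a0 g0 /eqP ny hs; move: hs; solve_cz x y w. Qed.
Lemma czC x y w al ga : 0 < al -> 0 < ga -> x != 0 -> y != 0 -> Num.sg w = - Num.sg x ->
  (ZZ x y w al ga < CC x y w al ga \/ ZZ x y w al ga < - CC x y w al ga).
Proof. move=> a0 g0 /eqP nx /eqP ny hs; move: hs; solve_cz x y w. Qed.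
End Arith.
Section Z.
Variable R : realFieldType.

Definition ramp (p x : nat) : R := ((x - p)%N)%:R.

Lemma D2_ramp p k : D2 (ramp p) k = if k.+1 == p then 1 else 0.
Proof.
rewrite /D2 /ramp; case: (ltngtP k.+1 p) => H.
- have -> : (k - p = 0)%N by lia.
  have -> : (k.+1 - p = 0)%N by lia.
  have -> : (k.+2 - p = 0)%N by lia.
  by rewrite mulr0 subr0 addr0.
- have -> : (k.+1 - p = (k - p).+1)%N by lia.
  have -> : (k.+2 - p = (k - p).+2)%N by lia.
  rewrite !mulrS; ring.
- have -> : (k - p = 0)%N by lia.
  have -> : (k.+1 - p = 0)%N by lia.
  have -> : (k.+2 - p = 1)%N by lia.
  by rewrite mulr0 subr0 add0r.
Qed.

Definition tent (a b c : nat) (x : nat) : R :=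
  (c - b)%:R * ramp a x - (c - a)%:R * ramp b x + (b - a)%:R * ramp c x.

Lemma D2_tent a b c k : D2 (tent a b c) k =
  (c - b)%:R * D2 (ramp a) k - (c - a)%:R * D2 (ramp b) k + (b - a)%:R * D2 (ramp c) k.
Proof. rewrite /D2 /tent; ring. Qed.

Lemma tent_out a b c x : (a < b < c)%N -> (x <= a)%N || (c <= x)%N -> tent a b c x = 0.
Proof.
move=> /andP[ab bc] /orP[xa|cx]; rewrite /tent /ramp.
- have -> : (x - a = 0)%N by lia.
  have -> : (x - b = 0)%N by lia.
  have -> : (x - c = 0)%N by lia.
  by rewrite !mulr0 subr0 addr0.
- rewrite !natrB; try lia. ring.
Qed.

Lemma sum_ind (m N a : nat) (K : R) : (m < a <= N)%N ->
  \sum_(m <= k < N) (if k.+1 == a then K else 0) = K.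
Proof.
move=> H.
rewrite (big_cat_nat _ (n := a.-1)); try lia.
rewrite (big_ltn (m := a.-1)); try lia.
have -> : (a.-1.+1 == a) by apply/eqP; lia.
rewrite big_nat_cond big1; last first.
  move=> i /andP[/andP[h1 h2] _]; case: eqVneq => //; lia.
rewrite big_nat_cond big1; last first.
  move=> i /andP[/andP[h1 h2] _]; case: eqVneq => //; lia.
by rewrite /= add0r addr0.
Qed.

End Z.
Unset Implicit Arguments. Set Strict Implicit.
Lemma decrease (R : realFieldType) n (M : pred nat) (y : nat -> R) eps (zs : nat -> R) a b c :
  (2 <= a)%N -> (a < b < c)%N -> (c <= n.-1)%N ->
  (forall s, M s -> (s <= a)%N || (c <= s)%N) -> feasible M y eps zs ->
  let al := (c - b)%:R in let ga := (b - a)%:R in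
  let x := D2 zs a.-1 in let yy := D2 zs b.-1 in let w := D2 zs c.-1 in
  (ZZ x yy w al ga < CC x yy w al ga \/ ZZ x yy w al ga < - CC x yy w al ga) ->
  exists z, feasible M y eps z /\ tv2 n z < tv2 n zs.
Proof.
move=> a2 abc cn Ms feas al ga x yy w HC.
have al0 : 0 < al by rewrite /al ltr0n; lia.
have ga0 : 0 < ga by rewrite /ga ltr0n; lia.
have [t Ht] := triple al0 ga0 HC.
have ca : (c - a)%:R = al + ga :> R by rewrite /al /ga -natrD; congr (_%:R); lia.
exists (fun s => zs s + t * tent R a b c s); split.
  move=> s Hs; rewrite tent_out //; last exact: Ms.
  by rewrite mulr0 addr0; apply: feas.
have pt k : `|D2 (fun s => zs s + t * tent R a b c s) k| =
   `|D2 zs k| + (if k.+1 == a then `|x + t * al| - `|x| else 0)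
   + (if k.+1 == b then `|yy - t * (al + ga)| - `|yy| else 0)
   + (if k.+1 == c then `|w + t * ga| - `|w| else 0).
  have -> : D2 (fun s => zs s + t * tent R a b c s) k = D2 zs k + t * D2 (tent R a b c) k.
    by rewrite /D2; ring.
  have hv := D2_tent R a b c k; rewrite !D2_ramp ca in hv; rewrite hv.
  case: (eqVneq k.+1 a) => [ea|na]; case: (eqVneq k.+1 b) => [eb|nb];
    case: (eqVneq k.+1 c) => [ec|nc]; try lia.
  - rewrite /x -ea /= mulr1 !mulr0 subr0 !addr0; lra.
  - rewrite /yy -eb /= mulr1 !mulr0 sub0r !addr0 mulrN; lra.
  - rewrite /w -ec /= mulr1 !mulr0 subr0 add0r !addr0; lra.
  - rewrite !mulr0 subr0 !addr0; by rewrite mulr0 addr0.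
rewrite /tv2 (eq_bigr _ (fun k _ => pt k)) !big_split /=.
rewrite !sum_ind; try lia.
rewrite -/(tv2 n zs); lra.
Qed.
Lemma sg_opp (R : realFieldType) (u v : R) : Num.sg u != 0 -> Num.sg v != 0 ->
  Num.sg u != Num.sg v -> Num.sg v = - Num.sg u.
Proof.
case: (sg_cases u) => [[? [-> _]]|[[? [-> _]]|[? [-> _]]]];
case: (sg_cases v) => [[? [-> _]]|[[? [-> _]]|[? [-> _]]]];
rewrite ?eqxx //= ?opprK //.
Qed.

Theorem theorem3 (R : realFieldType) (n : nat) (eps : R) (M : pred nat)
  (y zs : nat -> R) :
  (3 <= n)%N -> 0 <= eps ->
  twin_union n M -> M 1%N -> M n ->
  optimal n M y eps zs ->
  sign_consistent n M zs.
Proof.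
move=> n3 eps0 [Mr Mt] M1 Mn [feas opt] i j Mi Mj ij cons.
case: (classic (forall k, (i < k < j)%N -> sgn2 zs k = 0)) => [H|H]; [by right|left].
have [m Hm] := not_all_ex_not _ _ H.
have [hm sm'] := imply_to_and _ _ Hm.
have sm : sgn2 zs m != 0 by apply/eqP.
have i2 : (2 <= i)%N.
  have [j0 [[e|e] h1 h2 Mj0 Mj1]] := Mt i Mi.
    subst j0; have := cons i.+1; rewrite Mj1 => /(_ _)/negP; lia.
  lia.
have jn : (j <= n.-1)%N.
  have [j0 [[e|e] h1 h2 Mj0 Mj1]] := Mt j Mj.
    lia.
  subst j; have := cons j0; rewrite Mj0 => /(_ _)/negP; lia.
have Ms : forall s, M s -> (s <= i)%N || (j <= s)%N.
  move=> s Hs; case: (leqP s i) => //= si; case: (leqP j s) => //= sj.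
  by have := cons s; rewrite si sj Hs => /(_ isT).
have main : forall p r, (i <= p)%N -> (p < r)%N -> (r <= j)%N ->
    D2 zs p.-1 != 0 -> Num.sg (D2 zs r.-1) = - Num.sg (D2 zs p.-1) -> False.
  move=> p r ip pr rj np sr.
  have dec : forall a b c, (i <= a)%N -> (a < b < c)%N -> (c <= j)%N ->
      let al := (c - b)%:R in let ga := (b - a)%:R in
      let x := D2 zs a.-1 in let yy := D2 zs b.-1 in let w := D2 zs c.-1 in
      (ZZ x yy w al ga < CC x yy w al ga \/ ZZ x yy w al ga < - CC x yy w al ga) -> False.
    move=> a b c ia abc cj al ga x yy w HC.
    have hM : forall s, M s -> (s <= a)%N || (c <= s)%N.
      by move=> s Hs; have := Ms s Hs; lia.
    have := (@decrease R n M y eps zs a b c) (leq_trans i2 ia) abc (leq_trans cj jn) hM feas HC.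
    move=> [z [fz tz]].
    by have := opt z fz; lra.
  have al0 : forall u v : nat, (u < v)%N -> 0 < (v - u)%:R :> R.
    by move=> u v uv; rewrite ltr0n; lia.
  case: (ltnP i p) => ip'.
    apply: (dec i p r) => //; try (apply/andP; split; lia).
    by apply: czA => //; apply: al0 => //; lia.
  have pi : p = i by lia.
  subst p.
  case: (ltnP r j) => rj'.
    apply: (dec i r j) => //; try (apply/andP; split; lia).
    by apply: czB => //; apply: al0 => //; lia.
  have rj2 : r = j by lia. subst r.
  have /andP[im mj] := hm.
  apply: (dec i m j) => //; try (apply/andP; split; lia).
  apply: czC => //; try (apply: al0; lia).
  by move: sm; apply: contra => /eqP; rewrite /sgn2 => ->; rewrite sgr0.
move=> k h hk hh k2 h2 sk sh.
case: (eqVneq (sgn2 zs k) (sgn2 zs h)) => // ne; exfalso.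
have sho := @sg_opp R _ _ sk sh ne.
have nz u : sgn2 zs u != 0 -> D2 zs u.-1 != 0.
  by rewrite /sgn2 sgr_eq0.
case: (ltngtP k h) => kh.
- apply: (main k h); try lia; first exact: nz.
  exact: sho.
- apply: (main h k); try lia; first exact: nz.
  by rewrite /sgn2 in sho *; rewrite sho opprK.
- by subst; rewrite eqxx in ne.
Qed.
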